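(* For all integers $n\geq 1$, the rockers function $\lambda$ satisfies the asymptotic relation \[ \lambda(n)\sim \frac{n^{\,n-\frac{1}{2n}-\frac{1}{2}}\sqrt{2\pi}}{e^{\,n+\Psi(n)-1}}\qquad (n\to\infty), \] where \[ \Psi(n):=\int_{1}^{n-1}\frac{\sum_{1\leq j\leq t}\log (n-j)}{(t+1)^2}\,dt . \]
   Context: The rockers function $\lambda:\mathbb{N}\to\mathbb{R}^{+}$ is defined by $\lambda(1)=1$, $\lambda(2)=2$, and for $n\geq 3$, \[ \lambda(n)=2^{\frac{n-2}{n-1}}\,3^{\frac{n-3}{n-2}}\cdots (n-1)^{\frac{1}{2}}\, n=\prod_{k=0}^{n-2}(n-k)^{\frac{k}{k+1}} . \] Here $\log$ denotes the natural logarithm, the sum $\sum_{1\le j\le t}$ runs over integers $j$ with $1\le j\le t$ (for real $t$), and $f(n)\sim g(n)$ means $f(n)/g(n)\to 1$ as $n\to\infty$. *)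

(* Defs.v *)
From Stdlib Require Import Reals.
Open Scope R_scope.

(* Rockers function, following the explicit product
   lambda(n) = 2^{(n-2)/(n-1)} 3^{(n-3)/(n-2)} ... (n-1)^{1/2} n,
   i.e. n * prod_{k=0}^{n-2} (n-k)^{k/(k+1)} (the k = 0 factor equals 1). *)
Definition rockers (n : nat) : R :=
  match n with
  | O => 1            (* lambda is defined on N = {1,2,...}; value at 0 is irrelevant *)
  | 1%nat => 1
  | 2%nat => 2
  | _ => INR n * prod_f_R0 (fun k => Rpower (INR (n - k)) (INR k / INR (k + 1))) (n - 2)
  end.

(* Integrand of Psi(n):  t |-> (sum_{1 <= j <= t} log(n-j)) / (t+1)^2.
   Only integers j <= n+1 are summed; on [1, n-1] this is the full sum. *)
Definition psi_integrand (n : nat) (t : R) : R :=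
  sum_f_R0 (fun k => if Rle_dec (INR (S k)) t then ln (INR n - INR (S k)) else 0) n
  / (t + 1) ^ 2.

Definition rockers_asym (n : nat) (psi : R) : R :=
  Rpower (INR n) (INR n - 1 / (2 * INR n) - 1 / 2) * sqrt (2 * PI)
  / exp (INR n + psi - 1).

(* Main.v *)
Require Import Defs.
From Stdlib Require Import Reals Lra Lia Arith.
From Coquelicot Require Import Coquelicot.
Open Scope R_scope.
Ltac cont_tac := rewrite continuity_pt_filterlim;
  match goal with |- filterlim ?f (locally ?x) _ => change (continuous f x) end;
  apply (@ex_derive_continuous R_AbsRing R_NormedModule).

Definition WI k : R := RInt (fun x => sin x ^ k) 0 (PI/2).

Lemma ex_I k sa b : ex_RInt (fun x => sin x ^ k) sa b.
Proof. apply (@ex_RInt_continuous R_CompleteNormedModule); intros z _. apply (@ex_derive_continuous R_AbsRing R_NormedModule). auto_derive. auto. Qed.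

Lemma I_rec k : INR (k+2) * WI (k+2) = INR (k+1) * WI k.
Proof.
  assert (H : is_RInt (fun x => INR (k+2) * sin x ^ (k+2) - INR (k+1) * sin x ^ k) 0 (PI/2)
     ((fun x => - cos x * sin x ^ (k+1)) (PI/2) - (fun x => - cos x * sin x ^ (k+1)) 0)).
  { apply (is_RInt_derive (fun x => - cos x * sin x ^ (k+1))).
    - intros x _. auto_derive. auto.
      replace (k+2)%nat with (S (S k)) by lia. replace (k+1)%nat with (S k) by lia.
      rewrite !S_INR. simpl. pose proof (sin2_cos2 x). unfold Rsqr in H.
      match goal with |- ?L = ?R => assert (E: L - R = (INR k + 1) * sin x ^ k * (1 - (sin x * sin x + cos x * cos x))) by ring end.
      rewrite H in E. lra.
    - intros x _. apply (@ex_derive_continuous R_AbsRing R_NormedModule). auto_derive. auto. }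
  cbv beta in H. rewrite cos_PI2, sin_0 in H.
  replace (- 0 * sin (PI / 2) ^ (k+1) - - cos 0 * 0 ^ (k+1)) with 0 in H
    by (replace (k+1)%nat with (S k) by lia; simpl; ring).
  pose proof (RInt_correct _ _ _ (ex_I (k+2) 0 (PI/2))) as A.
  pose proof (RInt_correct _ _ _ (ex_I k 0 (PI/2))) as B.
  pose proof (is_RInt_minus _ _ _ _ _ _ (is_RInt_scal _ _ _ (INR (k+2)) _ A) (is_RInt_scal _ _ _ (INR(k+1)) _ B)) as C.
  apply (is_RInt_ext _ (fun x => INR (k+2)*sin x^(k+2) - INR(k+1)*sin x^k)) in C.
  2: { intros; unfold minus, plus, opp, scal; simpl; unfold mult; simpl; ring. }
  apply (@is_RInt_unique R_CompleteNormedModule) in C.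
  apply (@is_RInt_unique R_CompleteNormedModule) in H.
  rewrite H in C. unfold WI. unfold minus, plus, opp, scal in C; simpl in C; unfold mult in C; simpl in C.
  lra.
Qed.

Lemma I0 : WI 0 = PI/2.
Proof.
  unfold WI. simpl. rewrite RInt_const. unfold scal; simpl; unfold mult; simpl. ring.
Qed.

Lemma I1 : WI 1 = 1.
Proof.
  assert (H : is_RInt (fun x => sin x) 0 (PI/2) ((fun x => - cos x) (PI/2) - (fun x => - cos x) 0)).
  { apply (is_RInt_derive (fun x => - cos x)).
    - intros x _. auto_derive. auto. ring.
    - intros x _. apply (@ex_derive_continuous R_AbsRing R_NormedModule). auto_derive. auto. }
  cbv beta in H. rewrite cos_PI2, cos_0 in H.
  apply (is_RInt_ext _ (fun x => sin x ^ 1)) in H. 2: intros; simpl; ring.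
  apply (@is_RInt_unique R_CompleteNormedModule) in H. unfold WI. rewrite H. lra.
Qed.

Lemma I_decr k : WI (S k) <= WI k.
Proof.
  unfold WI. apply RInt_le. pose proof PI_RGT_0; lra. apply ex_I. apply ex_I.
  intros x Hx. simpl. pose proof PI_RGT_0.
  assert (0 <= sin x) by (apply sin_ge_0; lra). pose proof (SIN_bound x).
  pose proof (pow_le (sin x) k H0). nra.
Qed.

Fixpoint w (n : nat) : R :=
  match n with O => 1 | S n => w n * (2 * INR n + 1) / (2 * INR n + 2) end.

Lemma w_pos n : 0 < w n.
Proof.
  induction n; simpl. lra. pose proof (pos_INR n).
  apply Rmult_lt_0_compat. apply Rmult_lt_0_compat; lra. apply Rinv_0_lt_compat; lra.
Qed.

Lemma I_even_odd n : WI (2*n) = PI/2 * w n /\ WI (2*n+1) * ((2*INR n+1) * w n) = 1.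
Proof.
  induction n.
  - simpl. rewrite I0. replace (0+0+1)%nat with 1%nat by lia. rewrite I1. split; ring.
  - destruct IHn as [E O]. pose proof (pos_INR n) as Hn.
    pose proof (I_rec (2*n)) as R1. pose proof (I_rec (2*n+1)) as R2.
    replace (2 * S n + 1)%nat with (2*n+1+2)%nat by lia.
    replace (2 * S n)%nat with (2*n+2)%nat by lia.
    rewrite !plus_INR, mult_INR in R1. rewrite !plus_INR, mult_INR in R2.
    replace (INR 2) with 2 in R1, R2 by (simpl; ring). replace (INR 1) with 1 in R1, R2 by (simpl; ring).
    rewrite E in R1. rewrite S_INR. simpl w. pose proof (w_pos n).
    split.
    + apply (Rmult_eq_reg_l (2 * INR n + 2)). rewrite R1. field. lra. lra.
    + assert (Hi : WI (2*n+1) = / ((2*INR n+1) * w n)). { apply (Rmult_eq_reg_r ((2*INR n+1)*w n)). rewrite O. field. split; lra. apply Rmult_integral_contrapositive; split; lra. }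
      rewrite Hi in R2.
      assert (WI (2*n+1+2) = (2 * INR n + 2) / (2 * INR n + 2 + 1) * /((2 * INR n + 1) * w n)).
      { apply (Rmult_eq_reg_l (2 * INR n + 2 + 1)). replace (2 * INR n + 2 + 1) with (2 * INR n + 1 + 2) by ring. rewrite R2. field. split; lra. lra. }
      rewrite H0. field. split; lra.
Qed.

Lemma w_low n : 2 <= PI * (2*INR n+1) * w n ^ 2.
Proof.
  destruct (I_even_odd n) as [E O]. pose proof (I_decr (2*n)) as D.
  replace (S (2*n)) with (2*n+1)%nat in D by lia. rewrite E in D.
  pose proof (w_pos n). pose proof (pos_INR n).
  assert (Hi : WI (2*n+1) = / ((2*INR n+1) * w n)).
  { apply (Rmult_eq_reg_r ((2*INR n+1)*w n)). rewrite O. field. split; lra.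
    apply Rmult_integral_contrapositive; split; lra. }
  rewrite Hi in D.
  apply (Rmult_le_compat_l (2*(2*INR n+1)*w n)) in D. 2: nra.
  replace (2 * (2 * INR n + 1) * w n * / ((2 * INR n + 1) * w n)) with 2 in D by (field; split; lra).
  nra.
Qed.

Lemma w_up n : PI * (INR n + 1) * w (S n) ^ 2 <= 1.
Proof.
  destruct (I_even_odd n) as [E O]. destruct (I_even_odd (S n)) as [E' _].
  pose proof (I_decr (2*n+1)) as D.
  replace (S (2*n+1)) with (2 * S n)%nat in D by lia. rewrite E' in D.
  pose proof (w_pos n). pose proof (w_pos (S n)). pose proof (pos_INR n).
  assert (Hi : WI (2*n+1) = / ((2*INR n+1) * w n)).
  { apply (Rmult_eq_reg_r ((2*INR n+1)*w n)). rewrite O. field. split; lra.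
    apply Rmult_integral_contrapositive; split; lra. }
  rewrite Hi in D.
  assert (Ew : (2*INR n+1) * w n = (2*INR n+2) * w (S n)).
  { simpl w. field. lra. }
  rewrite Ew in D.
  apply (Rmult_le_compat_l (2*(INR n+1)*w (S n))) in D. 2: nra.
  replace (2 * (INR n + 1) * w (S n) * / ((2 * INR n + 2) * w (S n))) with 1 in D by (field; split; lra).
  nra.
Qed.

Lemma lim_inv_lin c : 0 < c -> is_lim_seq (fun n => / (INR n + c)) 0.
Proof.
  intros Hc.
  replace (Finite 0) with (Rbar_inv p_infty) by reflexivity.
  apply is_lim_seq_inv. 2: discriminate.
  eapply is_lim_seq_plus. apply is_lim_seq_INR. apply is_lim_seq_const. reflexivity.
Qed.

Lemma wallis : is_lim_seq (fun n => INR (S n) * w (S n) ^ 2) (/ PI).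
Proof.
  pose proof PI_RGT_0.
  apply (is_lim_seq_le_le (fun n => / PI - / PI * / (2 * INR n + 3)) _ (fun n => / PI)).
  - intros n. pose proof (pos_INR n). pose proof (w_low (S n)). pose proof (w_up n).
    rewrite S_INR in *. split.
    + apply (Rmult_le_reg_l (PI * (2*INR n + 3))). nra.
      replace (PI * (2 * INR n + 3) * (/ PI - / PI * / (2 * INR n + 3))) with (2 * INR n + 2) by (field; lra).
      nra.
    + apply (Rmult_le_reg_l PI). lra. rewrite Rinv_r by lra. nra.
  - assert (L: is_lim_seq (fun n => /PI - /PI * (/2 * /(INR n + 3/2))) (/PI - /PI*(/2*0))).
    { apply is_lim_seq_minus'; [apply is_lim_seq_const| apply is_lim_seq_mult'; [apply is_lim_seq_const | apply is_lim_seq_mult'; [apply is_lim_seq_const| apply lim_inv_lin; lra]]]. }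
    replace (/PI - /PI*(/2*0)) with (/PI) in L by ring.
    eapply is_lim_seq_ext; [|exact L]. intros n. simpl. pose proof (pos_INR n). field. lra.
  - apply is_lim_seq_const.
Qed.

Lemma ln_bounds x : 0 <= x < 1 ->
  2*x <= ln (1+x) - ln (1-x) /\ ln (1+x) - ln (1-x) <= 2*x + 2*x^3/(3*(1-x^2)).
Proof.
  intros Hx. destruct (Req_dec x 0) as [->|Hx0].
  { rewrite Rplus_0_r, Rminus_0_r, ln_1. split; simpl; lra. }
  split.
  - destruct (MVT_gen (fun t => ln (1+t) - ln (1-t) - 2*t) 0 x (fun t => 2*t^2/(1-t^2))) as [c [Hc E]].
    + intros t Ht. rewrite Rmin_left, Rmax_right in Ht by lra. auto_derive. repeat split; lra. field. repeat split; nra.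
    + intros t Ht. rewrite Rmin_left, Rmax_right in Ht by lra.
      cont_tac. auto_derive. repeat split; lra.
    + rewrite Rmin_left, Rmax_right in Hc by lra. rewrite Rplus_0_r, Rminus_0_r, ln_1 in E.
      assert (0 <= 2*c^2/(1-c^2)). { apply Rmult_le_pos. nra. apply Rlt_le, Rinv_0_lt_compat. nra. }
      nra.
  - destruct (MVT_gen (fun t => ln (1+t) - ln (1-t) - 2*t - 2*t^3/(3*(1-t^2))) 0 x (fun t => - (4*t^4/(3*(1-t^2)^2)))) as [c [Hc E]].
    + intros t Ht. rewrite Rmin_left, Rmax_right in Ht by lra. auto_derive. repeat split; nra. field. repeat split; nra.
    + intros t Ht. rewrite Rmin_left, Rmax_right in Ht by lra.
      cont_tac. auto_derive. repeat split; nra.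
    + rewrite Rmin_left, Rmax_right in Hc by lra. rewrite Rplus_0_r, Rminus_0_r, ln_1 in E.
      assert (0 <= 4*c^4/(3*(1-c^2)^2)). { apply Rmult_le_pos. nra. apply Rlt_le, Rinv_0_lt_compat. assert (0 < 1 - c^2) by nra. apply Rmult_lt_0_compat; [lra| apply pow_lt; lra]. }
      replace (0 - 0 - 2 * 0 - 2 * 0 ^ 3 / (3 * (1 - 0 ^ 2))) with 0 in E by (simpl; field).
      nra.
Qed.

Lemma step_bound y : 1 <= y ->
  0 <= (y + /2) * (ln (y+1) - ln y) - 1 <= /12 * (/y - /(y+1)).
Proof.
  intros Hy. set (x := /(2*y+1)).
  assert (Hx : 0 <= x < 1). { unfold x. split. apply Rlt_le, Rinv_0_lt_compat; lra.
    apply (Rmult_lt_reg_l (2*y+1)). lra. rewrite Rinv_r by lra. lra. }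
  assert (E : ln (1+x) - ln (1-x) = ln (y+1) - ln y).
  { replace (1+x) with (2*(y+1)/(2*y+1)) by (unfold x; field; lra).
    replace (1-x) with (2*y/(2*y+1)) by (unfold x; field; lra).
    rewrite !ln_div by lra. rewrite !ln_mult by lra. ring. }
  destruct (ln_bounds x Hx) as [L U]. rewrite E in L, U.
  assert (K1 : (y + /2) * (2*x) = 1) by (unfold x; field; lra).
  assert (K2 : (y + /2) * (2*x^3/(3*(1-x^2))) = /12 * (/y - /(y+1))).
  { unfold x. field. repeat split; try lra; intro H; nra. }
  split.
  - apply (Rmult_le_compat_l (y + /2)) in L; lra.
  - apply (Rmult_le_compat_l (y + /2)) in U. 2: lra. rewrite Rmult_plus_distr_l in U. lra.
Qed.

Fixpoint lf (n : nat) : R := match n with O => 0 | S m => lf m + ln (INR (S m)) end.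

Definition sa (n : nat) : R := lf (S n) - (INR (S n) + /2) * ln (INR (S n)) + INR (S n).

Lemma a_step n : sa n - sa (S n) = (INR (S n) + /2) * (ln (INR (S n) + 1) - ln (INR (S n))) - 1.
Proof.
  unfold sa. change (lf (S (S n))) with (lf (S n) + ln (INR (S (S n)))).
  rewrite (S_INR (S n)). ring.
Qed.

Lemma a_decr n : sa (S n) <= sa n.
Proof.
  pose proof (a_step n). assert (1 <= INR (S n)) by (apply (le_INR 1); lia).
  pose proof (step_bound _ H0). lra.
Qed.

Lemma a_lb n : 11/12 <= sa n.
Proof.
  assert (G : forall n, sa 0 - /12 * (1 - / INR (S n)) <= sa n).
  { induction n0. simpl. rewrite Rinv_1. lra.
    pose proof (a_step n0). assert (1 <= INR (S n0)) by (apply (le_INR 1); lia).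
    pose proof (step_bound _ H0). rewrite (S_INR (S n0)). lra. }
  specialize (G n). assert (sa 0 = 1). { unfold sa. simpl. rewrite Rplus_0_l, ln_1. ring. }
  assert (0 <= / INR (S n)). { apply Rlt_le, Rinv_0_lt_compat. apply lt_0_INR. lia. }
  lra.
Qed.

Lemma a_cv : exists C : R, is_lim_seq sa C.
Proof.
  assert (ex_finite_lim_seq sa) by (apply (ex_finite_lim_seq_decr _ (11/12)); [apply a_decr | apply a_lb]).
  destruct H as [C HC]. exists C. exact HC.
Qed.

Lemma lnw m : ln (w m) = lf (2*m) - 2 * lf m - 2 * INR m * ln 2.
Proof.
  induction m.
  - simpl. rewrite ln_1. ring.
  - pose proof (pos_INR m). pose proof (w_pos m).
    replace (2 * S m)%nat with (S (S (2*m))) by lia.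
    change (lf (S (S (2*m)))) with (lf (2*m) + ln (INR (S (2*m))) + ln (INR (S (S (2*m))))).
    change (lf (S m)) with (lf m + ln (INR (S m))).
    simpl w. rewrite ln_div, ln_mult; try nra.
    rewrite IHm. replace (INR (S (2*m))) with (2*INR m+1) by (rewrite S_INR, mult_INR; simpl; ring).
    replace (INR (S (S (2*m)))) with (2*(INR m + 1)) by (rewrite !S_INR, mult_INR; simpl; ring).
    replace (2*INR m + 2) with (2*(INR m+1)) by ring. rewrite S_INR. rewrite ln_mult by lra. ring.
Qed.

Lemma lnmw n : ln (INR (S n) * w (S n) ^ 2) = 2 * sa (2*n+1) - 4 * sa n + ln 2.
Proof.
  pose proof (pos_INR n). pose proof (w_pos (S n)).
  rewrite ln_mult. 2: rewrite S_INR; lra. 2: apply pow_lt; lra.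
  replace (w (S n) ^ 2) with (w (S n) * w (S n)) by ring. rewrite ln_mult by lra.
  rewrite lnw. unfold sa. replace (S (2*n+1)) with (2 * S n)%nat by lia.
  rewrite mult_INR. simpl (INR 2). replace (1+1) with 2 by ring.
  rewrite ln_mult. 2: lra. 2: rewrite S_INR; lra. field.
Qed.

Lemma a_lim : is_lim_seq sa (ln (2*PI) / 2).
Proof.
  destruct a_cv as [C HC].
  assert (H1 : is_lim_seq (fun n => ln (INR (S n) * w (S n) ^ 2)) (ln (/PI))).
  { apply is_lim_seq_continuous. 2: apply wallis.
    pose proof PI_RGT_0. cont_tac. auto_derive. apply Rinv_0_lt_compat; lra. }
  assert (H2 : is_lim_seq (fun n => ln (INR (S n) * w (S n) ^ 2)) (2 * C - 4 * C + ln 2)).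
  { eapply is_lim_seq_ext. intros n; symmetry; apply lnmw.
    apply is_lim_seq_plus'. 2: apply is_lim_seq_const.
    apply is_lim_seq_minus'.
    - pose proof (is_lim_seq_mult' (fun _ => 2) sa 2 C (is_lim_seq_const 2) HC) as HC2.
      apply (is_lim_seq_subseq _ _ (fun n => 2*n+1)%nat) in HC2.
      exact HC2. apply eventually_subseq. intros; lia.
    - exact (is_lim_seq_mult' (fun _ => 4) sa 4 C (is_lim_seq_const 4) HC). }
  apply is_lim_seq_unique in H1. apply is_lim_seq_unique in H2. rewrite H1 in H2.
  injection H2 as H2. pose proof PI_RGT_0.
  rewrite ln_Rinv in H2 by lra. rewrite ln_mult by lra.
  replace (ln 2 + ln PI) with (2*C) by lra. replace (2*C/2) with C by field. exact HC.
Qed.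

Lemma is_RInt_zero_fun (g : R -> R) a b :
  (forall t, Rmin a b < t < Rmax a b -> g t = 0) -> is_RInt g a b 0.
Proof.
  intros H. apply (is_RInt_ext (fun _ => 0)). intros t Ht. rewrite H; auto.
  pose proof (@is_RInt_const R_NormedModule a b 0) as K.
  unfold scal in K; simpl in K; unfold mult in K; simpl in K. rewrite Rmult_0_r in K. exact K.
Qed.

Lemma term_RInt (j m : nat) (c : R) : (1 <= j)%nat ->
  is_RInt (fun t => (if Rle_dec (INR j) t then c else 0) / (t+1)^2) 1 (INR m)
    (if le_lt_dec j m then c * (/(INR j + 1) - /(INR m + 1)) else 0).
Proof.
  intros Hj. assert (Hj1 : 1 <= INR j) by (apply (le_INR 1); lia).
  pose proof (pos_INR m) as Hm.
  assert (Z : is_RInt (fun t => (if Rle_dec (INR j) t then c else 0) / (t+1)^2) 1 (INR j) 0).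
  { apply is_RInt_zero_fun. intros t Ht. rewrite Rmin_left, Rmax_right in Ht by lra.
    destruct (Rle_dec (INR j) t). lra. unfold Rdiv. ring. }
  assert (V : is_RInt (fun t => (if Rle_dec (INR j) t then c else 0) / (t+1)^2) (INR j) (INR m)
    (if le_lt_dec j m then c * (/(INR j + 1) - /(INR m + 1)) else 0)).
  2: { pose proof (is_RInt_Chasles _ _ _ _ _ _ Z V) as W. unfold plus in W; simpl in W.
       rewrite Rplus_0_l in W. exact W. }
  destruct (le_lt_dec j m) as [L|L].
  - assert (Hjm : INR j <= INR m) by (apply le_INR; lia).
    assert (D : is_RInt (fun t => c / (t+1)^2) (INR j) (INR m)
               ((fun t => - c / (t+1)) (INR m) - (fun t => - c / (t+1)) (INR j))).
    { apply (is_RInt_derive (fun t => - c / (t+1))).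
      - intros x Hx. rewrite Rmin_left, Rmax_right in Hx by lra.
        auto_derive. lra. field. lra.
      - intros x Hx. rewrite Rmin_left, Rmax_right in Hx by lra.
        apply (@ex_derive_continuous R_AbsRing R_NormedModule). auto_derive. intro HH; nra. }
    cbv beta in D. replace (c * (/ (INR j + 1) - / (INR m + 1))) with (- c / (INR m + 1) - - c / (INR j + 1)) by (field; lra).
    eapply is_RInt_ext; [|exact D]. intros t Ht. rewrite Rmin_left, Rmax_right in Ht by lra.
    destruct (Rle_dec (INR j) t). reflexivity. lra.
  - assert (Hjm : INR m < INR j) by (apply lt_INR; lia).
    apply is_RInt_zero_fun. intros t Ht. rewrite Rmin_right, Rmax_left in Ht by lra.
    destruct (Rle_dec (INR j) t). lra. unfold Rdiv. ring.
Qed.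

Lemma sum_div (f : nat -> R) d N : sum_f_R0 (fun k => f k / d) N = sum_f_R0 f N / d.
Proof. induction N; simpl. reflexivity. rewrite IHN. unfold Rdiv; ring. Qed.

Lemma is_RInt_sum_gen (g : nat -> R -> R) (v : nat -> R) a b N :
  (forall k, (k <= N)%nat -> is_RInt (g k) a b (v k)) ->
  is_RInt (fun t => sum_f_R0 (fun k => g k t) N) a b (sum_f_R0 v N).
Proof.
  induction N; intros H.
  - simpl. apply H. lia.
  - simpl. pose proof (is_RInt_plus _ _ _ _ _ _ (IHN (fun k Hk => H k ltac:(lia))) (H (S N) ltac:(lia))) as P.
    exact P.
Qed.

Definition V (m k : nat) : R :=
  if le_lt_dec (S k) m then ln (INR (S m) - INR (S k)) * (/(INR (S k) + 1) - /(INR m + 1)) else 0.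

Lemma psi_RInt m : is_RInt (psi_integrand (S m)) 1 (INR (S m) - 1) (sum_f_R0 (V m) (S m)).
Proof.
  replace (INR (S m) - 1) with (INR m) by (rewrite S_INR; ring).
  apply (is_RInt_ext (fun t => sum_f_R0 (fun k => (if Rle_dec (INR (S k)) t then ln (INR (S m) - INR (S k)) else 0) / (t+1)^2) (S m))).
  { intros t _. unfold psi_integrand. rewrite sum_div. reflexivity. }
  apply is_RInt_sum_gen. intros k _. unfold V. apply term_RInt. lia.
Qed.

Lemma lf_rev N : lf (S N) = sum_f_R0 (fun i => ln (INR (S N) - INR i)) N.
Proof.
  induction N.
  - simpl. rewrite Rminus_0_r. ring.
  - rewrite decomp_sum by lia. simpl pred.
    rewrite (sum_eq _ (fun i => ln (INR (S N) - INR i))).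
    2: { intros i _. f_equal. rewrite (S_INR (S N)), (S_INR i). ring. }
    rewrite <- IHN. change (lf (S (S N))) with (lf (S N) + ln (INR (S (S N)))).
    simpl (INR 0). rewrite Rminus_0_r. ring.
Qed.

Lemma sum_identity p :
  let m := S (S p) in
  sum_f_R0 (fun k => INR k / INR (k + 1) * ln (INR (S m - k))) (S m - 2)
  + sum_f_R0 (V m) (S m) = (1 - / INR (S m)) * lf m.
Proof.
  intros m. set (F := fun i => ln (INR m - INR i)).
  replace (S m - 2)%nat with (S p) by (unfold m; lia).
  assert (HA : sum_f_R0 (fun k => INR k / INR (k + 1) * ln (INR (S m - k))) (S p)
             = sum_f_R0 (fun i => (INR i + 1)/(INR i + 2) * F i) (S p)).
  { rewrite decomp_sum by lia. simpl pred. rewrite tech5.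
    assert (E0 : F (S p) = 0). { unfold F, m. rewrite (S_INR (S p)). replace (INR (S p) + 1 - INR (S p)) with 1 by ring. apply ln_1. }
    rewrite E0. simpl (INR 0). unfold Rdiv at 1. rewrite !Rmult_0_l, Rmult_0_r, Rplus_0_l, Rplus_0_r.
    apply sum_eq. intros i Hi. unfold F.
    replace (INR (S i + 1)) with (INR i + 2) by (rewrite plus_INR, S_INR; simpl; ring).
    rewrite S_INR. f_equal. f_equal. rewrite minus_INR by (unfold m; lia).
    rewrite !S_INR. ring. }
  assert (HB : sum_f_R0 (V m) (S m) = sum_f_R0 (fun i => F i * (/(INR i + 2) - / INR (S m))) (S p)).
  { unfold m. rewrite (tech5 (V (S (S p))) (S (S p))), (tech5 (V (S (S p))) (S p)).
    unfold V at 2 3. destruct (le_lt_dec _ (S (S p))) as [L|_]; [lia|].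
    destruct (le_lt_dec _ (S (S p))) as [L|_]; [lia|]. rewrite !Rplus_0_r.
    apply sum_eq. intros i Hi. unfold V. destruct (le_lt_dec (S i) (S (S p))) as [_|L]; [|lia].
    unfold F. f_equal.
    - unfold m. f_equal. rewrite !S_INR. ring.
    - rewrite (S_INR i), (S_INR (S (S p))). replace (INR i + 1 + 1) with (INR i + 2) by ring. reflexivity. }
  rewrite HA, HB, <- sum_plus.
  assert (HC : lf m = sum_f_R0 F (S p)) by (unfold m, F; apply lf_rev).
  rewrite HC, scal_sum. apply sum_eq. intros i _.
  assert (0 < INR (S m)) by (apply lt_0_INR; lia). pose proof (pos_INR i).
  field. lra.
Qed.

Lemma prod_exp (f : nat -> R) N : prod_f_R0 (fun k => exp (f k)) N = exp (sum_f_R0 f N).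
Proof. induction N; simpl. reflexivity. rewrite IHN, exp_plus. reflexivity. Qed.

Definition K := ln (2*PI) / 2.

Definition Dm (m : nat) : R := (sa m - K) + ln (INR (S m)) / INR (S m) - sa m / INR (S m).

Lemma ratio_eq p :
  let m := S (S p) in
  rockers (S m) / rockers_asym (S m) (sum_f_R0 (V m) (S m)) = exp (Dm m).
Proof.
  intros m.
  change (rockers (S m)) with (INR (S m) * prod_f_R0 (fun k => Rpower (INR (S m - k)) (INR k / INR (k + 1))) (S m - 2)).
  unfold Rpower. rewrite prod_exp.
  set (LA := sum_f_R0 (fun k => INR k / INR (k + 1) * ln (INR (S m - k))) (S m - 2)).
  set (P := sum_f_R0 (V m) (S m)).
  pose proof (sum_identity p) as SI. cbv zeta in SI. fold m in SI. fold LA P in SI.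
  set (n := INR (S m)). fold n in SI.
  assert (Hn : 0 < n) by (apply lt_0_INR; lia).
  unfold rockers_asym. fold n. rewrite <- Rpower_sqrt by (pose proof PI_RGT_0; lra).
  unfold Rpower.
  rewrite <- (exp_ln n) at 1 by lra.
  assert (Hlf : lf m = sa m + (n + /2) * ln n - n - ln n).
  { unfold sa. fold n. change (lf (S m)) with (lf m + ln (INR (S m))). fold n. ring. }
  replace (exp (ln n) * exp LA / (exp ((n - 1 / (2 * n) - 1 / 2) * ln n) * exp (/ 2 * ln (2 * PI)) / exp (n + P - 1)))
    with (exp (ln n + LA - (n - 1 / (2 * n) - 1 / 2) * ln n - / 2 * ln (2 * PI) + (n + P - 1))).
  2: { unfold Rminus. rewrite !exp_plus, !exp_Ropp. pose proof (exp_pos (ln n)).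
       pose proof (exp_pos ((n + - (1 / (2 * n)) + - (1 / 2)) * ln n)).
       pose proof (exp_pos (/ 2 * ln (2 * PI))). pose proof (exp_pos n). pose proof (exp_pos P). pose proof (exp_pos 1).
       field. repeat split; lra. }
  f_equal. unfold Dm, K. fold n.
  replace (ln n + LA - (n - 1 / (2 * n) - 1 / 2) * ln n - / 2 * ln (2 * PI) + (n + P - 1))
    with (ln n + (LA + P) - (n - 1 / (2 * n) - 1 / 2) * ln n - / 2 * ln (2 * PI) + (n - 1)) by ring.
  rewrite SI, Hlf. field. lra.
Qed.

Lemma Dm_lim : is_lim_seq Dm 0.
Proof.
  assert (HS : is_lim_seq (fun m => INR (S m)) p_infty).
  { apply (is_lim_seq_incr_1 INR). apply is_lim_seq_INR. }
  assert (L1 : is_lim_seq (fun m => sa m - K) (K - K)).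
  { apply is_lim_seq_minus'. apply a_lim. apply is_lim_seq_const. }
  assert (L2 : is_lim_seq (fun m => ln (INR (S m)) / INR (S m)) 0).
  { eapply (is_lim_comp_seq (fun y => ln y / y)). apply is_lim_div_ln_p.
    exists 0%nat. intros; discriminate. exact HS. }
  assert (L3 : is_lim_seq (fun m => sa m / INR (S m)) (K * 0)).
  { apply is_lim_seq_mult'. apply a_lim.
    eapply is_lim_seq_ext; [|apply (lim_inv_lin 1); lra]. intros m. rewrite S_INR. reflexivity. }
  pose proof (is_lim_seq_minus' _ _ _ _ (is_lim_seq_plus' _ _ _ _ L1 L2) L3) as L.
  replace (K - K + 0 - K * 0) with 0 in L by ring. exact L.
Qed.

Theorem mainTheorem1 :
  (forall n : nat, inhabited (Riemann_integrable (psi_integrand (S n)) 1 (INR (S n) - 1))) /\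
  (forall pr : forall n : nat, Riemann_integrable (psi_integrand (S n)) 1 (INR (S n) - 1),
     Un_cv (fun n => rockers (S n) / rockers_asym (S n) (RiemannInt (pr n))) 1).
Proof.
  split.
  - intros n. constructor. apply ex_RInt_Reals_0. eexists. apply psi_RInt.
  - intros pr. apply is_lim_seq_Reals.
    apply (is_lim_seq_ext_loc (fun m => exp (Dm m))).
    + exists 2%nat. intros m Hm. destruct m as [|[|p]]; try lia.
      rewrite <- RInt_Reals. rewrite (@is_RInt_unique R_CompleteNormedModule _ _ _ _ (psi_RInt _)).
      symmetry. apply (ratio_eq p).
    + rewrite <- exp_0. apply is_lim_seq_continuous. 2: apply Dm_lim.
      cont_tac. auto_derive. auto.
Qed.
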